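(* Let $G$ be a finite group and $H \leqslant G$. If $|HP|$ divides $|G|$ for every Sylow subgroup $P$ of $G$ (for every prime), then $|HK|$ divides $|G|$ for every subgroup $K \leqslant G$.
   Context: For subgroups $A,B$, $AB$ denotes the product set $\{ab : a \in A, b \in B\}$. *)

(* Defs.v *)
From mathcomp Require Import all_boot all_fingroup all_solvable.
From mathcomp Require Import pgroup.

(* Main.v *)
Require Import Defs.
From mathcomp Require Import all_boot all_fingroup all_solvable.
From mathcomp Require Import zify.
From mathcomp Require Import pgroup.

Lemma pcard_log {gT : finGroupType} (p : nat) (A : {set gT}) :
  pgroup p A -> #|A| = (p ^ logn p #|A|)%N.
Proof. by move=> pA; rewrite -p_part part_pnat_id. Qed.

Lemma sylow_log {gT : finGroupType} p (G P : {group gT}) :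
  prime p -> pHall p G P -> logn p #|P| = logn p #|G|.
Proof. by move=> pp sP; rewrite (card_Hall sP) p_part pfactorK. Qed.

Lemma logM_cardG {gT : finGroupType} (p : nat) (A B : {group gT}) :
  (logn p #|A| + logn p #|B| = logn p #|(A * B)%g| + logn p #|A :&: B|)%N.
Proof.
have h1 : 0 < #|(A * B)%g|.
  by apply/card_gt0P; exists 1%g; apply/mulsgP; exists 1%g 1%g; rewrite ?group1 ?mulg1.
by rewrite -!lognM ?cardG_gt0 // mul_cardG.
Qed.

Theorem mainTheorem10 (gT : finGroupType) (G H : {group gT}) :
  H \subset G ->
  (forall (p : nat) (P : {group gT}), prime p -> P \in ('Syl_p(G))%g ->
     (#|(H * P)%g| %| #|G|)%N) ->
  forall K : {group gT}, K \subset G -> (#|(H * K)%g| %| #|G|)%N.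
Proof.
move=> sHG hyp K sKG.
have hHK : 0 < #|(H * K)%g|.
  by apply/card_gt0P; exists 1%g; apply/mulsgP; exists 1%g 1%g; rewrite ?group1 ?mulg1.
apply/dvdn_partP => // p; rewrite mem_primes => /andP[pp _].
rewrite !p_part.
rewrite pfactor_dvdn // ?cardG_gt0.
have [S sylS] := Sylow_exists p K.
have sSK := pHall_sub sylS; have pS := pHall_pgroup sylS.
have [P sylP sSP] := Sylow_superset (subset_trans sSK sKG) pS.
have pP := pHall_pgroup sylP.
have hHP : logn p #|H| <= logn p #|H :&: P|.
  have := hyp p P pp; rewrite inE => /(_ sylP) d.
  have := dvdn_leq_log p (cardG_gt0 G) d.
  have := logM_cardG p H P; rewrite (sylow_log p G P pp sylP). lia.
have pHP : pgroup p (H :&: P) by apply: pgroupS pP; apply: subsetIr.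
have pI : pgroup p ((H :&: P) :&: S) by apply: pgroupS pS; apply: subsetIr.
have key : logn p #|H :&: P| + logn p #|S| <= logn p #|P| + logn p #|(H :&: P) :&: S|.
  have c1 : #|H :&: P| * #|S| <= #|P| * #|(H :&: P) :&: S|.
    rewrite mul_cardG leq_mul2r; apply/orP; right; apply: subset_leq_card.
    by apply: mul_subG => //; apply: subsetIr.
  rewrite -(leq_exp2l _ _ (prime_gt1 pp)) !expnD.
  by rewrite -(pcard_log _ _ pHP) -(pcard_log _ _ pS) -(pcard_log _ _ pP) -(pcard_log _ _ pI).
have hIK : logn p #|(H :&: P) :&: S| <= logn p #|H :&: K|.
  apply: dvdn_leq_log; first exact: cardG_gt0.
  apply: cardSg; apply/subsetP => x; rewrite !inE => /andP[/andP[hx _] sx]; by rewrite hx (subsetP sSK _ sx).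
have lS : logn p #|S| = logn p #|K| by apply: (sylow_log p K S pp sylS).
have lP : logn p #|P| = logn p #|G| by apply: (sylow_log p G P pp sylP).
have := logM_cardG p H K.
lia.
Qed.
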